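(* Let $(X,d,\mu)$ be as in the context (no doubling assumed), $x\in X$, and $q,R_0>0$. Then $q\in\underline{Q}_0(x)$ if and only if there is $C>0$ with $\mu(B_r)/\mu(B_R)\le C(r/R)^q$ for all $0<r<R\le R_0$; similarly $q\in\overline{Q}_0(x)$ if and only if there is $C>0$ with $\mu(B_r)/\mu(B_R)\ge C(r/R)^q$ for all $0<r<R\le R_0$. Assume furthermore that $f(r):=\mu(B_r)$ is locally absolutely continuous on $(0,\infty)$, and let $\underline{q}=\operatorname{ess\,lim\,inf}_{r\to0} rf'(r)/f(r)$ and $\overline{q}=\operatorname{ess\,lim\,sup}_{r\to0}rf'(r)/f(r)$. Then $(0,\underline{q})\subset\underline{Q}_0(x)\subset(0,\overline{q}]$ and $(\overline{q},\infty)\subset\overline{Q}_0(x)\subset[\underline{q},\infty)$.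
   Context: $(X,d,\mu)$ is a metric space with a positive complete Borel measure $\mu$ such that $0<\mu(B)<\infty$ for every ball $B$; $B_r=B(x,r)$. $\underline{Q}_0(x)=\{q>0:\exists C_q,\ \mu(B_r)/\mu(B_R)\le C_q(r/R)^q\text{ for }0<r<R\le1\}$ and $\overline{Q}_0(x)=\{q>0:\exists C_q,\ \mu(B_r)/\mu(B_R)\ge C_q(r/R)^q\text{ for }0<r<R\le1\}$. *)

(* Defs.v *)
From Stdlib Require Import Reals Lra.
Open Scope R_scope.

Inductive ER : Type := Fin (r : R) | PInf | MInf.

Definition ER_le (x y : ER) : Prop :=
  match x, y with
  | MInf, _ => True
  | _, PInf => True
  | Fin a, Fin b => a <= b
  | _, _ => False
  end.
Definition ER_lt (x y : ER) : Prop := ER_le x y /\ x <> y.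

Definition ER_add (x y : ER) : ER :=
  match x, y with
  | Fin a, Fin b => Fin (a + b)
  | MInf, _ | _, MInf => MInf
  | _, _ => PInf
  end.

Fixpoint ER_psum (a : nat -> ER) (n : nat) : ER :=
  match n with O => Fin 0 | S m => ER_add (ER_psum a m) (a m) end.

Definition is_sup (S : ER -> Prop) (L : ER) : Prop :=
  (forall e, S e -> ER_le e L) /\
  (forall M, (forall e, S e -> ER_le e M) -> ER_le L M).
Definition is_inf (S : ER -> Prop) (L : ER) : Prop :=
  (forall e, S e -> ER_le L e) /\
  (forall M, (forall e, S e -> ER_le M e) -> ER_le M L).

Definition is_metric {X : Type} (d : X -> X -> R) : Prop :=
  (forall x y, 0 <= d x y) /\ (forall x y, d x y = 0 <-> x = y) /\
  (forall x y, d x y = d y x) /\ (forall x y z, d x z <= d x y + d y z).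

Definition ball {X : Type} (d : X -> X -> R) (x : X) (r : R) : X -> Prop :=
  fun y => d x y < r.

Definition is_open {X : Type} (d : X -> X -> R) (U : X -> Prop) : Prop :=
  forall y, U y -> exists e, 0 < e /\ forall z, d y z < e -> U z.

Definition is_sigma_algebra {X : Type} (M : (X -> Prop) -> Prop) : Prop :=
  M (fun _ => True) /\
  (forall A, M A -> M (fun y => ~ A y)) /\
  (forall A : nat -> X -> Prop, (forall n, M (A n)) -> M (fun y => exists n, A n y)).

Definition is_measure {X : Type} (M : (X -> Prop) -> Prop) (mu : (X -> Prop) -> ER) : Prop :=
  is_sigma_algebra M /\
  mu (fun _ => False) = Fin 0 /\
  (forall A, M A -> ER_le (Fin 0) (mu A)) /\
  (forall A : nat -> X -> Prop,
     (forall n, M (A n)) ->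
     (forall n m y, n <> m -> A n y -> A m y -> False) ->
     is_sup (fun e => exists n, e = ER_psum (fun k => mu (A k)) n)
            (mu (fun y => exists n, A n y))).

Definition is_complete_borel_measure {X : Type} (d : X -> X -> R)
  (M : (X -> Prop) -> Prop) (mu : (X -> Prop) -> ER) : Prop :=
  is_measure M mu /\
  (forall U, is_open d U -> M U) /\
  (forall A N, M N -> mu N = Fin 0 -> (forall y, A y -> N y) -> M A).

Definition balls_pos_finite {X : Type} (d : X -> X -> R) (mu : (X -> Prop) -> ER) : Prop :=
  forall x r, 0 < r -> exists v, mu (ball d x r) = Fin v /\ 0 < v.

(* f(r) = mu(B(x,r)) as a real number (finite by assumption) *)
Definition ball_meas {X : Type} (d : X -> X -> R) (mu : (X -> Prop) -> ER) (x : X) (r : R) : R :=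
  match mu (ball d x r) with Fin v => v | _ => 0 end.

Definition Qlow {X : Type} (d : X -> X -> R) (mu : (X -> Prop) -> ER) (x : X) (q : R) : Prop :=
  0 < q /\ exists C, 0 < C /\ forall r R0, 0 < r -> r < R0 -> R0 <= 1 ->
    ball_meas d mu x r / ball_meas d mu x R0 <= C * Rpower (r / R0) q.

Definition Qup {X : Type} (d : X -> X -> R) (mu : (X -> Prop) -> ER) (x : X) (q : R) : Prop :=
  0 < q /\ exists C, 0 < C /\ forall r R0, 0 < r -> r < R0 -> R0 <= 1 ->
    ball_meas d mu x r / ball_meas d mu x R0 >= C * Rpower (r / R0) q.

Fixpoint psum (g : nat -> R) (n : nat) : R :=
  match n with O => 0 | S m => psum g m + g m end.

Definition abs_cont_on (f : R -> R) (a b : R) : Prop :=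
  forall eps, 0 < eps -> exists del, 0 < del /\
    forall (n : nat) (u v : nat -> R),
      (forall i, (i < n)%nat -> a <= u i /\ u i <= v i /\ v i <= b) ->
      (forall i, (S i < n)%nat -> v i <= u (S i)) ->
      psum (fun i => v i - u i) n < del ->
      psum (fun i => Rabs (f (v i) - f (u i))) n < eps.

Definition loc_abs_cont (f : R -> R) : Prop :=
  forall a b, 0 < a -> a < b -> abs_cont_on f a b.

Definition lnull (N : R -> Prop) : Prop :=
  forall eps, 0 < eps -> exists c e : nat -> R,
    (forall k, c k <= e k) /\
    (forall r, N r -> exists k, c k < r /\ r < e k) /\
    (forall n, psum (fun k => e k - c k) n <= eps).

(* g(r) = r f'(r)/f(r) >= t for a.e. r in (0,del), for some del > 0
   (points where f is not differentiable count as exceptional) *)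
Definition ess_ge_near0 (f : R -> R) (t : R) : Prop :=
  exists del, 0 < del /\
    lnull (fun r => 0 < r /\ r < del /\
             ~ (exists l, derivable_pt_lim f r l /\ t <= r * l / f r)).
Definition ess_le_near0 (f : R -> R) (t : R) : Prop :=
  exists del, 0 < del /\
    lnull (fun r => 0 < r /\ r < del /\
             ~ (exists l, derivable_pt_lim f r l /\ r * l / f r <= t)).

Definition is_ess_liminf (f : R -> R) (L : ER) : Prop :=
  is_sup (fun e => exists t, e = Fin t /\ ess_ge_near0 f t) L.
Definition is_ess_limsup (f : R -> R) (U : ER) : Prop :=
  is_inf (fun e => exists t, e = Fin t /\ ess_le_near0 f t) U.

(* Main.v *)
Require Import Defs.
From Stdlib Require Import Reals Lra Classical Arith Lia FunctionalExtensionality PropExtensionality.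
Open Scope R_scope.


Lemma psum_ext f g n : (forall i, (i < n)%nat -> f i = g i) -> psum f n = psum g n.
Proof. induction n; simpl; intros H; auto. rewrite IHn by (intros; apply H; lia). rewrite (H n) by lia. auto. Qed.

Lemma psum_le f g n : (forall i, (i < n)%nat -> f i <= g i) -> psum f n <= psum g n.
Proof. induction n; simpl; intros H; [lra|]. assert (f n <= g n) by (apply H; lia).
assert (psum f n <= psum g n) by (apply IHn; intros; apply H; lia). lra. Qed.

Lemma psum_plus f g n : psum (fun i => f i + g i) n = psum f n + psum g n.
Proof. induction n; simpl; lra. Qed.

Lemma psum_scal c f n : psum (fun i => c * f i) n = c * psum f n.
Proof. induction n; simpl; [lra|]. rewrite IHn. ring. Qed.

Lemma psum_mono_n f n m : (forall i, 0 <= f i) -> (n <= m)%nat -> psum f n <= psum f m.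
Proof. intros H Hnm. induction Hnm; simpl; [lra|]. specialize (H m). lra. Qed.

Lemma psum_diff_term f g K j : (forall k, f k <= g k) -> (j < K)%nat ->
  psum f K + (g j - f j) <= psum g K.
Proof. induction K; simpl; intros H Hj; [lia|].
  destruct (Nat.eq_dec j K) as [->|Hne].
  - assert (psum f K <= psum g K) by (apply psum_le; auto). lra.
  - assert (j < K)%nat by lia. specialize (IHK H H0). specialize (H K). lra. Qed.

Definition hh (c e : nat -> R) k x := Rmax 0 (Rmin (e k) x - c k).

Lemma hh_mono c e k x y : x <= y -> hh c e k x <= hh c e k y.
Proof. unfold hh, Rmax, Rmin; intros; repeat destruct Rle_dec; lra. Qed.
Lemma hh_nonneg c e k x : 0 <= hh c e k x.
Proof. unfold hh, Rmax, Rmin; intros; repeat destruct Rle_dec; lra. Qed.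

Lemma deriv_step F s l eps : derivable_pt_lim F s l -> 0 <= l -> 0 < eps ->
  exists dl, 0 < dl /\ forall x y, s - dl < x <= s -> s <= y < s + dl -> F y - F x >= - eps * (y - x).
Proof.
  intros Hd Hl He. destruct (Hd eps He) as [[dl Hdl] H]. simpl in H.
  exists dl; split; auto. intros x y Hx Hy.
  assert (A : F y - F s >= - eps * (y - s)).
  { destruct (Req_dec y s) as [->|Hne]; [lra|].
    specialize (H (y - s) ltac:(lra) ltac:(rewrite Rabs_right; lra)).
    replace (s + (y - s)) with y in H by ring.
    apply Rabs_def2 in H. destruct H as [H1 H2].
    set (q := (F y - F s) / (y - s)) in *.
    assert (F y - F s = q * (y - s)) by (unfold q; field; lra).
    assert (q * (y - s) >= -eps * (y - s)) by (apply Rle_ge; apply Rmult_le_compat_r; lra).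
    lra. }
  assert (B : F s - F x >= - eps * (s - x)).
  { destruct (Req_dec x s) as [->|Hne]; [lra|].
    specialize (H (x - s) ltac:(lra) ltac:(rewrite Rabs_left; lra)).
    replace (s + (x - s)) with x in H by ring.
    apply Rabs_def2 in H. destruct H as [H1 H2].
    set (q := (F x - F s) / (x - s)) in *.
    assert (F x - F s = q * (x - s)) by (unfold q; field; lra).
    assert (q * (s - x) >= -eps * (s - x)) by (apply Rle_ge; apply Rmult_le_compat_r; lra).
    lra. }
  lra.
Qed.

Lemma mono_lemma (F : R -> R) (N : R -> Prop) a b : a <= b -> abs_cont_on F a b -> lnull N ->
  (forall r, a <= r <= b -> ~ N r -> exists l, derivable_pt_lim F r l /\ 0 <= l) -> F a <= F b.
Proof.
  intros Hab HAC HN HD.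
  assert (Main : forall eps eps', 0 < eps -> 0 < eps' -> F b - F a >= - eps * (b - a) - eps').
  { intros eps eps' He He'.
    destruct (HAC eps' He') as [del [Hdel HACd]].
    destruct (HN (del/2) ltac:(lra)) as [c [e [Hce [Hcov Hlen]]]].
    set (Inv := fun x => exists n u v K,
      (forall i, (i < n)%nat -> a <= u i /\ u i <= v i /\ v i <= x) /\
      (forall i, (S i < n)%nat -> v i <= u (S i)) /\
      psum (fun i => v i - u i) n <= psum (fun k => hh c e k x) K /\
      F x - F a >= - eps * (x - a) - psum (fun i => Rabs (F (v i) - F (u i))) n).
    set (E := fun x => a <= x <= b /\ Inv x).
    assert (HEb : bound E) by (exists b; intros x [Hx _]; lra).
    assert (HEa : exists x, E x).
    { exists a. split; [lra|]. exists 0%nat, (fun _ => 0), (fun _ => 0), 0%nat.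
      simpl. repeat split; intros; try lia; lra. }
    destruct (completeness E HEb HEa) as [s [Hub Hlub]].
    assert (Has : a <= s) by (apply Hub; split; [lra|]; destruct HEa as [? [? ?]];
      exists 0%nat, (fun _ => 0), (fun _ => 0), 0%nat; simpl; repeat split; intros; try lia; lra).
    assert (Hsb : s <= b) by (apply Hlub; intros x [Hx _]; lra).
    assert (Approx : forall dl, 0 < dl -> exists x, E x /\ s - dl < x <= s).
    { intros dl Hdl. apply NNPP; intros Hn.
      assert (s <= s - dl); [|lra]. apply Hlub. intros x Hx.
      destruct (Rle_dec x (s - dl)); auto. exfalso; apply Hn. exists x.
      split; auto. split; [lra|]. apply Hub; auto. }
    assert (Key : Inv b).
    { destruct (classic (N s)) as [HNs|HNs].
      - destruct (Hcov s HNs) as [k [Hk1 Hk2]].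
        set (dl := Rmin (s - c k) (e k - s)).
        assert (Hdl : 0 < dl) by (unfold dl, Rmin; destruct Rle_dec; lra).
        destruct (Approx dl Hdl) as [x [[Hx1 [n [u [v [K [I1 [I2 [I3 I4]]]]]]]] Hx2]].
        set (s' := Rmin (s + dl/2) b).
        assert (Hs'1 : x <= s' <= b) by (unfold s', Rmin; destruct Rle_dec; lra).
        assert (Hck : c k < x) by (unfold dl, Rmin in *; destruct Rle_dec; lra).
        assert (Hek : s' < e k) by (unfold s', dl, Rmin in *; repeat destruct Rle_dec; lra).
        assert (HI : Inv s').
        { exists (S n), (fun i => if Nat.ltb i n then u i else x),
                 (fun i => if Nat.ltb i n then v i else s'), (Nat.max K (S k)).
          split; [|split; [|split]].
          + intros i Hi. destruct (Nat.ltb_spec i n).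
            * destruct (I1 i H) as [? [? ?]]. repeat split; lra.
            * repeat split; lra.
          + intros i Hi. destruct (Nat.ltb_spec i n); destruct (Nat.ltb_spec (S i) n); try lia.
            * apply I2; lia.
            * assert (i = n - 1)%nat by lia. subst i. destruct (I1 (n-1)%nat ltac:(lia)) as [? [? ?]]. lra.
          + simpl. destruct (Nat.ltb_spec n n); [lia|].
            rewrite (psum_ext _ (fun i => v i - u i)) by (intros i Hi; destruct (Nat.ltb_spec i n); lia || reflexivity).
            assert (psum (fun k0 => hh c e k0 x) K <= psum (fun k0 => hh c e k0 x) (Nat.max K (S k)))
              by (apply psum_mono_n; [intros; apply hh_nonneg | lia]).
            assert (psum (fun k0 => hh c e k0 x) (Nat.max K (S k)) + (hh c e k s' - hh c e k x)
                    <= psum (fun k0 => hh c e k0 s') (Nat.max K (S k)))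
              by (apply (psum_diff_term (fun k0 => hh c e k0 x) (fun k0 => hh c e k0 s')); [intros; apply hh_mono; lra | lia]).
            assert (hh c e k s' - hh c e k x = s' - x)
              by (unfold hh, Rmax, Rmin; repeat destruct Rle_dec; lra).
            lra.
          + simpl. destruct (Nat.ltb_spec n n); [lia|].
            rewrite (psum_ext _ (fun i => Rabs (F (v i) - F (u i)))) by (intros i Hi; destruct (Nat.ltb_spec i n); lia || reflexivity).
            assert (- Rabs (F s' - F x) <= F s' - F x) by (rewrite <- Rabs_Ropp; apply Rle_trans with (- (- (F s' - F x))); [apply Ropp_le_contravar; apply Rle_abs| lra]).
            assert (eps * (x - a) <= eps * (s' - a)) by (apply Rmult_le_compat_l; lra).
            lra. }
        assert (Hs'b : s' = b).
        { assert (s' <= s) by (apply Hub; split; [lra|auto]).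
          unfold s' in *. destruct (Rle_dec (s + dl/2) b).
          - rewrite Rmin_left in H by lra. lra.
          - rewrite Rmin_right by lra. auto. }
        rewrite <- Hs'b; exact HI.
      - destruct (HD s ltac:(lra) HNs) as [l [Hder Hl]].
        destruct (deriv_step F s l eps Hder Hl He) as [dl [Hdl Hst]].
        destruct (Approx dl Hdl) as [x [[Hx1 [n [u [v [K [I1 [I2 [I3 I4]]]]]]]] Hx2]].
        set (s' := Rmin (s + dl/2) b).
        assert (Hs'1 : s <= s' <= b /\ s' < s + dl) by (unfold s', Rmin; destruct Rle_dec; lra).
        assert (HI : Inv s').
        { exists n, u, v, K. split; [|split; [|split]].
          + intros i Hi. destruct (I1 i Hi) as [? [? ?]]. repeat split; lra.
          + auto.
          + assert (psum (fun k => hh c e k x) K <= psum (fun k => hh c e k s') K)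
              by (apply psum_le; intros; apply hh_mono; lra). lra.
          + specialize (Hst x s' ltac:(lra) ltac:(lra)). lra. }
        assert (Hs'b : s' = b).
        { assert (s' <= s) by (apply Hub; split; [lra|auto]).
          unfold s' in *. destruct (Rle_dec (s + dl/2) b).
          - rewrite Rmin_left in H by lra. lra.
          - rewrite Rmin_right by lra. auto. }
        rewrite <- Hs'b; exact HI. }
    destruct Key as [n [u [v [K [I1 [I2 [I3 I4]]]]]]].
    assert (psum (fun k => hh c e k b) K <= psum (fun k => e k - c k) K).
    { apply psum_le; intros k _. specialize (Hce k). unfold hh, Rmax, Rmin; repeat destruct Rle_dec; lra. }
    specialize (Hlen K).
    assert (psum (fun i => Rabs (F (v i) - F (u i))) n < eps').
    { apply HACd; [intros i Hi; destruct (I1 i Hi) as [? [? ?]]; repeat split; lra| exact I2 | lra]. }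
    lra. }
  apply Rnot_lt_le; intros Hlt.
  set (D := F a - F b).
  set (eps := D / (4 * (b - a + 1))).
  assert (Heps : 0 < eps) by (unfold eps, D; apply Rdiv_lt_0_compat; lra).
  assert (eps * (b - a + 1) = D / 4) by (unfold eps; field; lra).
  assert (eps * (b - a) <= eps * (b - a + 1)) by (apply Rmult_le_compat_l; lra).
  specialize (Main eps (D/4) Heps ltac:(unfold D; lra)). unfold D in *. lra.
Qed.
Lemma exp_le' x y : x <= y -> exp x <= exp y.
Proof. intros H; destruct (Rle_lt_or_eq_dec _ _ H) as [Hl|Heq]; [|subst]; [left; apply exp_increasing; auto | lra]. Qed.
Lemma ln_le' x y : 0 < x -> x <= y -> ln x <= ln y.
Proof. intros H0 H; destruct (Rle_lt_or_eq_dec _ _ H) as [Hl|Heq]; [|subst]; [left; apply ln_increasing; auto | lra]. Qed.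

Lemma Rpow_bound a b c e : 0 < a -> a <= c <= b -> Rpower c e <= Rpower a e + Rpower b e.
Proof.
  intros Ha Hc. unfold Rpower.
  assert (ln a <= ln c) by (apply ln_le'; lra). assert (ln c <= ln b) by (apply ln_le'; lra).
  pose proof (exp_pos (e * ln a)). pose proof (exp_pos (e * ln b)).
  destruct (Rle_dec 0 e).
  - assert (exp (e * ln c) <= exp (e * ln b)) by (apply exp_le'; apply Rmult_le_compat_l; lra). lra.
  - assert (exp (e * ln c) <= exp (e * ln a)) by (apply exp_le'; nra). lra.
Qed.

Lemma ac_prod f g a b Bf Bg Lg : abs_cont_on f a b -> 0 <= Bf -> 0 <= Bg -> 0 <= Lg ->
  (forall r, a <= r <= b -> Rabs (f r) <= Bf) ->
  (forall r, a <= r <= b -> Rabs (g r) <= Bg) ->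
  (forall u v, a <= u -> u <= v -> v <= b -> Rabs (g v - g u) <= Lg * (v - u)) ->
  abs_cont_on (fun r => f r * g r) a b.
Proof.
  intros Hf HBf HBg HLg Hfb Hgb Hgl eps He.
  destruct (Hf (eps / (2 * (Bg + 1))) ltac:(apply Rdiv_lt_0_compat; lra)) as [d1 [Hd1 Hd1']].
  exists (Rmin d1 (eps / (2 * (Bf * Lg + 1)))). split.
  { apply Rmin_glb_lt; auto. apply Rdiv_lt_0_compat; [lra|]. nra. }
  intros n u v Hi Ho Hl.
  assert (Hl1 : psum (fun i => v i - u i) n < d1) by (pose proof (Rmin_l d1 (eps / (2 * (Bf * Lg + 1)))); lra).
  assert (Hl2 : psum (fun i => v i - u i) n < eps / (2 * (Bf * Lg + 1))) by (pose proof (Rmin_r d1 (eps / (2 * (Bf * Lg + 1)))); lra).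
  specialize (Hd1' n u v Hi Ho Hl1).
  apply Rle_lt_trans with (psum (fun i => Bg * Rabs (f (v i) - f (u i)) + (Bf * Lg) * (v i - u i)) n).
  { apply psum_le. intros i Hin. destruct (Hi i Hin) as [? [? ?]].
    replace (f (v i) * g (v i) - f (u i) * g (u i)) with ((f (v i) - f (u i)) * g (v i) + f (u i) * (g (v i) - g (u i))) by ring.
    eapply Rle_trans; [apply Rabs_triang|]. rewrite !Rabs_mult.
    assert (Rabs (g (v i)) <= Bg) by (apply Hgb; lra).
    assert (Rabs (f (u i)) <= Bf) by (apply Hfb; lra).
    assert (Rabs (g (v i) - g (u i)) <= Lg * (v i - u i)) by (apply Hgl; lra).
    pose proof (Rabs_pos (f (v i) - f (u i))). pose proof (Rabs_pos (g (v i) - g (u i))).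
    pose proof (Rabs_pos (f (u i))).
    assert (Rabs (f (v i) - f (u i)) * Rabs (g (v i)) <= Bg * Rabs (f (v i) - f (u i))) by nra.
    assert (Rabs (f (u i)) * Rabs (g (v i) - g (u i)) <= Bf * (Lg * (v i - u i))) by nra.
    lra. }
  rewrite psum_plus, psum_scal, psum_scal.
  set (P := psum (fun i => Rabs (f (v i) - f (u i))) n) in *.
  set (Q := psum (fun i => v i - u i) n) in *.
  assert (HP : 0 <= P) by (unfold P; clear; induction n; simpl; [lra|]; pose proof (Rabs_pos (f (v n) - f (u n))); lra).
  assert (HQ : 0 <= Q).
  { unfold Q. apply Rle_trans with (psum (fun _ => 0) n). { clear; induction n; simpl; lra. }
    apply psum_le. intros i Hin; destruct (Hi i Hin); lra. }
  assert (A1 : (Bg + 1) * (eps / (2 * (Bg + 1))) = eps / 2) by (field; lra).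
  assert (A2 : (Bf * Lg + 1) * (eps / (2 * (Bf * Lg + 1))) = eps / 2) by (field; nra).
  assert (Bg * P <= Bg * (eps / (2 * (Bg + 1)))) by (apply Rmult_le_compat_l; lra).
  assert (Bf * Lg * Q <= Bf * Lg * (eps / (2 * (Bf * Lg + 1)))) by (apply Rmult_le_compat_l; nra || lra).
  assert (0 < eps / (2 * (Bg + 1))) by (apply Rdiv_lt_0_compat; lra).
  assert (0 < eps / (2 * (Bf * Lg + 1))) by (apply Rdiv_lt_0_compat; nra).
  nra.
Qed.

Lemma rpow_lip a b e : 0 < a -> forall u v, a <= u -> u <= v -> v <= b ->
  Rabs (Rpower v e - Rpower u e) <= (Rabs e * (Rpower a (e - 1) + Rpower b (e - 1))) * (v - u).
Proof.
  intros Ha u v Hu Huv Hv. destruct (Rle_lt_or_eq_dec _ _ Huv) as [Hlt|Heq].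
  - destruct (MVT_cor2 (fun x => Rpower x e) (fun x => e * Rpower x (e - 1)) u v Hlt) as [c [Hc1 Hc2]].
    { intros c Hc. apply derivable_pt_lim_power. lra. }
    rewrite Hc1, Rabs_mult, Rabs_mult, (Rabs_right (v - u)) by lra.
    apply Rmult_le_compat_r; [lra|]. apply Rmult_le_compat_l; [apply Rabs_pos|].
    rewrite Rabs_right by (left; apply exp_pos). apply Rpow_bound; lra.
  - subst. replace (Rpower v e - Rpower v e) with 0 by ring. rewrite Rabs_R0.
    pose proof (exp_pos ((e-1) * ln a)). pose proof (exp_pos ((e-1) * ln b)). unfold Rpower.
    replace (v - v) with 0 by ring. pose proof (Rabs_pos e). nra.
Qed.


Lemma pred_ext {X} (P Q : X -> Prop) : (forall y, P y <-> Q y) -> P = Q.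
Proof. intros H; apply functional_extensionality; intros y; apply propositional_extensionality; auto. Qed.

Lemma ball_open {X} (d : X -> X -> R) x r : is_metric d -> is_open d (ball d x r).
Proof.
  intros [H0 [H1 [H2 H3]]] y Hy. unfold ball in *. exists (r - d x y). split; [lra|].
  intros z Hz. specialize (H3 x y z). lra.
Qed.

Lemma M_union2 {X} (M : (X -> Prop) -> Prop) A B : is_sigma_algebra M -> M A -> M B ->
  M (fun y => A y \/ B y).
Proof.
  intros [HT [HC HU]] HA HB.
  set (F := fun n : nat => match n with O => A | _ => B end).
  assert (M (fun y => exists n, F n y)) by (apply HU; intros [|n]; simpl; auto).
  replace (fun y => A y \/ B y) with (fun y => exists n, F n y); auto.
  apply pred_ext; intros y; split.
  - intros [[|n] Hn]; simpl in Hn; auto.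
  - intros [Ha|Hb]; [exists O | exists 1%nat]; simpl; auto.
Qed.

Lemma M_diff {X} (M : (X -> Prop) -> Prop) A B : is_sigma_algebra M -> M A -> M B ->
  M (fun y => B y /\ ~ A y).
Proof.
  intros HS HA HB. pose proof HS as [HT [HC HU]].
  assert (M (fun y => ~ (~ B y \/ A y))) by (apply HC; apply M_union2; auto).
  replace (fun y => B y /\ ~ A y) with (fun y => ~ (~ B y \/ A y)); auto.
  apply pred_ext; intros y; split.
  - intros Hn; split; [apply NNPP|]; tauto.
  - tauto.
Qed.

Lemma M_empty {X} (M : (X -> Prop) -> Prop) : is_sigma_algebra M -> M (fun _ => False).
Proof.
  intros [HT [HC HU]]. replace (fun _ : X => False) with (fun y : X => ~ True); [apply HC; auto|].
  apply pred_ext; tauto.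
Qed.

Lemma mu_mono {X} (M : (X -> Prop) -> Prop) mu (A B : X -> Prop) a b :
  is_measure M mu -> M A -> M B -> (forall y, A y -> B y) -> mu A = Fin a -> mu B = Fin b -> a <= b.
Proof.
  intros [HS [H0 [Hpos Hadd]]] HA HB Hsub Ha Hb.
  set (F := fun n : nat => match n with O => A | 1%nat => (fun y => B y /\ ~ A y) | _ => (fun _ => False) end).
  assert (HF : forall n, M (F n)).
  { intros [|[|n]]; simpl; [auto | apply M_diff; auto | apply M_empty; auto]. }
  assert (Hdis : forall n m y, n <> m -> F n y -> F m y -> False).
  { intros [|[|n]] [|[|m]] y Hnm; simpl; tauto. }
  destruct (Hadd F HF Hdis) as [Hsup _].
  assert (HU : (fun y => exists n, F n y) = B).
  { apply pred_ext; intros y; split.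
    - intros [[|[|n]] Hn]; simpl in Hn; [auto | tauto | tauto].
    - intros Hy. destruct (classic (A y)); [exists O | exists 1%nat]; simpl; auto. }
  rewrite HU, Hb in Hsup.
  specialize (Hsup _ (ex_intro _ 2%nat eq_refl)). simpl in Hsup.
  rewrite Ha in Hsup.
  specialize (Hpos _ (HF 1%nat)). simpl in Hpos.
  destruct (mu (fun y => B y /\ ~ A y)); simpl in *; try contradiction. lra.
Qed.

Lemma bm_pos {X} (d : X -> X -> R) mu x r : balls_pos_finite d mu -> 0 < r ->
  mu (ball d x r) = Fin (ball_meas d mu x r) /\ 0 < ball_meas d mu x r.
Proof. intros H Hr. destruct (H x r Hr) as [v [Hv Hv']]. unfold ball_meas. rewrite Hv. auto. Qed.

Lemma bm_mono {X} (d : X -> X -> R) M mu x r s : is_metric d -> is_complete_borel_measure d M mu ->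
  balls_pos_finite d mu -> 0 < r -> r <= s -> ball_meas d mu x r <= ball_meas d mu x s.
Proof.
  intros Hd [Hm [Ho _]] Hb Hr Hrs.
  destruct (bm_pos d mu x r Hb Hr) as [E1 _]. destruct (bm_pos d mu x s Hb ltac:(lra)) as [E2 _].
  apply (mu_mono M mu (ball d x r) (ball d x s)); auto; try (apply Ho; apply ball_open; auto).
  unfold ball; intros; lra.
Qed.
Lemma rp_pos x q : 0 < Rpower x q.
Proof. apply exp_pos. Qed.
Lemma rp_mono_base x y q : 0 < x -> x <= y -> 0 <= q -> Rpower x q <= Rpower y q.
Proof. intros. unfold Rpower. apply exp_le'. apply Rmult_le_compat_l; auto. apply ln_le'; auto. Qed.
Lemma rp_ge1 x q : 1 <= x -> 0 <= q -> 1 <= Rpower x q.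
Proof. intros. rewrite <- exp_0. unfold Rpower. apply exp_le'. rewrite <- ln_1.
  assert (ln 1 <= ln x) by (apply ln_le'; lra). rewrite ln_1 in *. nra. Qed.
Lemma rp_le1 x q : 0 < x -> x <= 1 -> 0 <= q -> Rpower x q <= 1.
Proof. intros. rewrite <- exp_0. unfold Rpower. apply exp_le'.
  assert (ln x <= ln 1) by (apply ln_le'; lra). rewrite ln_1 in *. nra. Qed.
Lemma rp_mul x y q : 0 < x -> 0 < y -> Rpower (x * y) q = Rpower x q * Rpower y q.
Proof. intros. rewrite Rpower_mult_distr; auto. Qed.

Definition BL (f : R -> R) q A := exists C, 0 < C /\ forall r R, 0 < r -> r < R -> R <= A ->
  f r / f R <= C * Rpower (r / R) q.
Definition BU (f : R -> R) q A := exists C, 0 < C /\ forall r R, 0 < r -> r < R -> R <= A ->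
  f r / f R >= C * Rpower (r / R) q.


Lemma BL_restrict (f : R -> R) q A B : A <= B -> BL f q B -> BL f q A.
Proof. intros H [C [HC HB]]. exists C; split; auto. intros; apply HB; lra. Qed.
Lemma BU_restrict (f : R -> R) q A B : A <= B -> BU f q B -> BU f q A.
Proof. intros H [C [HC HB]]. exists C; split; auto. intros; apply HB; lra. Qed.

Lemma BL_extend (f : R -> R) (Hpos : forall r, 0 < r -> 0 < f r) (Hmono : forall r s, 0 < r -> r <= s -> f r <= f s) q A B : 0 < q -> 0 < A -> A <= B -> BL f q A -> BL f q B.
Proof.
  intros Hq HA HAB [C [HC HBd]].
  set (K := Rpower (B / A) q).
  assert (HK : 1 <= K) by (apply rp_ge1; [apply (Rmult_le_reg_r A); [lra|]; unfold Rdiv; rewrite Rmult_assoc, Rinv_l; lra | lra]).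
  exists ((C + 1) * K). split; [nra|].
  intros r R Hr HrR HR.
  assert (Hfr := Hpos r Hr). assert (HfR := Hpos R ltac:(lra)).
  pose proof (rp_pos (r / R) q) as Hp.
  destruct (Rle_dec R A) as [H1|H1].
  { specialize (HBd r R Hr HrR H1).
    assert (C * Rpower (r/R) q <= (C + 1) * K * Rpower (r/R) q) by (apply Rmult_le_compat_r; nra). lra. }
  destruct (Rle_dec A r) as [H2|H2].
  - assert (f r / f R <= 1).
    { apply (Rmult_le_reg_r (f R)); auto. unfold Rdiv; rewrite Rmult_assoc, Rinv_l by lra.
      rewrite Rmult_1_r, Rmult_1_l. apply Hmono; lra. }
    assert (1 <= Rpower (r / R) q * K).
    { unfold K. rewrite <- rp_mul by (apply Rdiv_lt_0_compat; lra). apply rp_ge1; [|lra].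
      assert (r / R * (B / A) = (r * B) / (R * A)) by (field; lra). rewrite H0.
      apply (Rmult_le_reg_r (R * A)); [nra|]. unfold Rdiv; rewrite Rmult_assoc, Rinv_l by nra. nra. }
    nra.
  - assert (HA' : f r / f R <= f r / f A).
    { unfold Rdiv. apply Rmult_le_compat_l; [lra|]. apply Rinv_le_contravar; [apply Hpos; lra|]. apply Hmono; lra. }
    specialize (HBd r A Hr ltac:(lra) ltac:(lra)).
    assert (Rpower (r / A) q <= Rpower (r / R) q * K).
    { unfold K. rewrite <- rp_mul by (apply Rdiv_lt_0_compat; lra).
      apply rp_mono_base; [apply Rdiv_lt_0_compat; lra| |lra].
      assert (r / R * (B / A) = (r / A) * (B / R)) by (field; lra). rewrite H.
      assert (r / A * 1 <= r / A * (B / R)); [|lra].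
      apply Rmult_le_compat_l; [apply Rlt_le, Rdiv_lt_0_compat; lra|].
      apply (Rmult_le_reg_r R); [lra|]. unfold Rdiv; rewrite Rmult_assoc, Rinv_l; lra. }
    nra.
Qed.

Lemma BU_extend (f : R -> R) (Hpos : forall r, 0 < r -> 0 < f r) (Hmono : forall r s, 0 < r -> r <= s -> f r <= f s) q A B : 0 < q -> 0 < A -> A <= B -> BU f q A -> BU f q B.
Proof.
  intros Hq HA HAB [C [HC HBd]].
  set (K := f A / f B).
  assert (HfA := Hpos A HA). assert (HfB := Hpos B ltac:(lra)).
  assert (HK0 : 0 < K) by (apply Rdiv_lt_0_compat; lra).
  assert (HK1 : K <= 1).
  { apply (Rmult_le_reg_r (f B)); auto. unfold K, Rdiv; rewrite Rmult_assoc, Rinv_l by lra.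
    rewrite Rmult_1_r, Rmult_1_l. apply Hmono; lra. }
  exists (Rmin C 1 * K). split; [apply Rmult_lt_0_compat; [apply Rmin_glb_lt; lra|lra]|].
  assert (Hm1 := Rmin_l C 1). assert (Hm2 := Rmin_r C 1).
  assert (Hm0 : 0 < Rmin C 1) by (apply Rmin_glb_lt; lra).
  intros r R Hr HrR HR.
  assert (Hfr := Hpos r Hr). assert (HfR := Hpos R ltac:(lra)).
  pose proof (rp_pos (r / R) q) as Hp.
  assert (HfRB : / f B <= / f R) by (apply Rinv_le_contravar; auto; apply Hmono; lra).
  destruct (Rle_dec R A) as [H1|H1].
  { specialize (HBd r R Hr HrR H1). apply Rle_ge. apply Rge_le in HBd.
    assert (Rmin C 1 * K * Rpower (r/R) q <= C * Rpower (r/R) q); [|lra].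
    apply Rmult_le_compat_r; [lra|]. nra. }
  destruct (Rle_dec A r) as [H2|H2].
  - assert (K <= f r / f R).
    { unfold K, Rdiv. apply Rmult_le_compat; try lra. { left; apply Rinv_0_lt_compat; lra. } apply Hmono; lra. }
    assert (Rpower (r / R) q <= 1) by (apply rp_le1; [apply Rdiv_lt_0_compat; lra| |lra];
      apply (Rmult_le_reg_r R); [lra|]; unfold Rdiv; rewrite Rmult_assoc, Rinv_l; lra).
    apply Rle_ge. assert (Rmin C 1 * K * Rpower (r / R) q <= K); [|lra].
    assert (Rmin C 1 * Rpower (r / R) q <= 1) by nra. nra.
  - specialize (HBd r A Hr ltac:(lra) ltac:(lra)). apply Rge_le in HBd.
    assert (Rpower (r / R) q <= Rpower (r / A) q).
    { apply rp_mono_base; [apply Rdiv_lt_0_compat; lra| |lra].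
      unfold Rdiv; apply Rmult_le_compat_l; [lra|]. apply Rinv_le_contravar; lra. }
    assert (E : f r / f R = (f r / f A) * (f A / f R)) by (field; lra).
    assert (K <= f A / f R) by (unfold K, Rdiv; apply Rmult_le_compat_l; lra).
    apply Rle_ge. rewrite E.
    assert (0 <= f r / f A) by (apply Rlt_le, Rdiv_lt_0_compat; lra).
    assert (Rmin C 1 * K * Rpower (r / R) q <= (C * Rpower (r / A) q) * K).
    { apply Rle_trans with (C * K * Rpower (r / R) q).
      - apply Rmult_le_compat_r; [lra|]. apply Rmult_le_compat_r; lra.
      - assert (C * K * Rpower (r / R) q <= C * K * Rpower (r / A) q) by (apply Rmult_le_compat_l; nra). lra. }
    apply Rle_trans with ((C * Rpower (r / A) q) * K); auto.
    apply Rmult_le_compat; try lra. pose proof (rp_pos (r/A) q). nra.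
Qed.

Lemma BL_equiv (f : R -> R) (Hpos : forall r, 0 < r -> 0 < f r) (Hmono : forall r s, 0 < r -> r <= s -> f r <= f s) q A B : 0 < q -> 0 < A -> 0 < B -> BL f q A -> BL f q B.
Proof. intros. destruct (Rle_dec A B). - apply (BL_extend f Hpos Hmono q A B); auto. - apply (BL_restrict f q B A); auto; lra. Qed.
Lemma BU_equiv (f : R -> R) (Hpos : forall r, 0 < r -> 0 < f r) (Hmono : forall r s, 0 < r -> r <= s -> f r <= f s) q A B : 0 < q -> 0 < A -> 0 < B -> BU f q A -> BU f q B.
Proof. intros. destruct (Rle_dec A B). - apply (BU_extend f Hpos Hmono q A B); auto. - apply (BU_restrict f q B A); auto; lra. Qed.



Lemma rp_div r R t : 0 < r -> 0 < R -> Rpower (r / R) t = Rpower r t / Rpower R t.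
Proof. intros. unfold Rpower, Rdiv. rewrite ln_mult, ln_Rinv by (auto; apply Rinv_0_lt_compat; auto).
  rewrite Rmult_plus_distr_l, exp_plus. replace (t * - ln R) with (- (t * ln R)) by ring.
  rewrite exp_Ropp. auto. Qed.

Lemma rp_m1 x t : 0 < x -> Rpower x (- t - 1) = Rpower x (- t) / x.
Proof. intros. unfold Rpower. replace ((- t - 1) * ln x) with (- t * ln x + - ln x) by ring.
  rewrite exp_plus, exp_Ropp, exp_ln by auto. auto. Qed.

Lemma deriv_mono_nonneg (f : R -> R) x l : 0 < x -> (forall r s, 0 < r -> r <= s -> f r <= f s) ->
  derivable_pt_lim f x l -> 0 <= l.
Proof.
  intros Hx Hm Hd. apply Rnot_lt_le; intros Hl.
  destruct (Hd (- l / 2) ltac:(lra)) as [[dl Hdl] H]. simpl in H.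
  specialize (H (dl / 2) ltac:(lra) ltac:(rewrite Rabs_right; lra)).
  assert (f x <= f (x + dl / 2)) by (apply Hm; lra).
  assert (0 <= (f (x + dl / 2) - f x) / (dl / 2)) by (apply Rmult_le_pos; [lra| left; apply Rinv_0_lt_compat; lra]).
  apply Rabs_def2 in H. lra.
Qed.

Lemma deriv_g t sgn x : 0 < x -> derivable_pt_lim (fun y => sgn * Rpower y (- t)) x (sgn * (- t * Rpower x (- t - 1))).
Proof.
  intros Hx. apply (derivable_pt_lim_scal (fun y => Rpower y (- t)) sgn x).
  apply derivable_pt_lim_power; auto.
Qed.

Lemma ac_fg (f : R -> R) (Hpos : forall r, 0 < r -> 0 < f r) (Hmono : forall r s, 0 < r -> r <= s -> f r <= f s) (Hac : loc_abs_cont f) t sgn r R : 0 < r -> r < R -> (sgn = 1 \/ sgn = -1) ->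
  abs_cont_on (fun x => f x * (sgn * Rpower x (- t))) r R.
Proof.
  intros Hr HrR Hs.
  apply (ac_prod f (fun x => sgn * Rpower x (- t)) r R (f R) (Rpower r (-t) + Rpower R (-t))
    (Rabs (-t) * (Rpower r (-t - 1) + Rpower R (-t - 1)))).
  - apply Hac; auto.
  - left; apply Hpos; lra.
  - pose proof (rp_pos r (-t)); pose proof (rp_pos R (-t)); lra.
  - pose proof (rp_pos r (-t-1)); pose proof (rp_pos R (-t-1)); pose proof (Rabs_pos (-t)). nra.
  - intros x Hx. rewrite Rabs_right by (left; apply Hpos; lra). apply Hmono; lra.
  - intros x Hx. rewrite Rabs_mult. assert (Rabs sgn = 1) by (destruct Hs; subst; [apply Rabs_R1| rewrite Rabs_left; lra]).
    rewrite H, Rmult_1_l, Rabs_right by (left; apply rp_pos). apply Rpow_bound; lra.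
  - intros u v Hu Huv Hv. replace (sgn * Rpower v (- t) - sgn * Rpower u (- t)) with (sgn * (Rpower v (- t) - Rpower u (- t))) by ring.
    rewrite Rabs_mult. assert (Rabs sgn = 1) by (destruct Hs; subst; [apply Rabs_R1| rewrite Rabs_left; lra]).
    rewrite H, Rmult_1_l. replace (- t - 1) with (-t - 1) by ring. apply rpow_lip; lra.
Qed.



Lemma ge_bound (f : R -> R) (Hpos : forall r, 0 < r -> 0 < f r) (Hmono : forall r s, 0 < r -> r <= s -> f r <= f s) (Hac : loc_abs_cont f) t : ess_ge_near0 f t ->
  exists D, 0 < D /\ forall r R, 0 < r -> r < R -> R <= D -> f r / f R <= Rpower (r / R) t.
Proof.
  intros [del [Hdel HN]]. exists (del / 2). split; [lra|]. intros r R Hr HrR HR.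
  assert (Hm := mono_lemma (fun x => f x * (1 * Rpower x (- t))) _ r R ltac:(lra) (ac_fg f Hpos Hmono Hac t 1 r R Hr HrR ltac:(auto)) HN).
  assert (Hle : f r * (1 * Rpower r (- t)) <= f R * (1 * Rpower R (- t))).
  { apply Hm. intros x Hx HNx.
    assert (Hex : exists l, derivable_pt_lim f x l /\ t <= x * l / f x).
    { apply NNPP; intros Hn; apply HNx; repeat split; auto; lra. }
    destruct Hex as [l [Hdl Htl]].
    exists (l * (1 * Rpower x (- t)) + f x * (1 * (- t * Rpower x (- t - 1)))). split.
    - apply (derivable_pt_lim_mult f (fun y => 1 * Rpower y (- t))); auto. apply deriv_g; lra.
    - rewrite rp_m1 by lra. assert (Hfx := Hpos x ltac:(lra)). pose proof (rp_pos x (-t)) as HP.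
      set (P := Rpower x (- t)) in *.
      assert (t * f x <= x * l).
      { apply (Rmult_le_reg_r (/ f x)). apply Rinv_0_lt_compat; lra.
        replace (t * f x * / f x) with t by (field; lra). exact Htl. }
      replace (l * (1 * P) + f x * (1 * (- t * (P / x)))) with ((P / x) * (x * l - t * f x)) by (field; lra).
      apply Rmult_le_pos; [apply Rlt_le, Rdiv_lt_0_compat; lra | lra]. }
  rewrite rp_div by lra. rewrite !Rmult_1_l, !Rpower_Ropp in Hle.
  pose proof (rp_pos r t). pose proof (rp_pos R t). assert (Hfr := Hpos r Hr). assert (HfR := Hpos R ltac:(lra)).
  apply (Rmult_le_reg_r (f R * Rpower r t)); [nra|].
  replace (f r / f R * (f R * Rpower r t)) with (f r * Rpower r t) by (field; lra).
  replace (Rpower r t / Rpower R t * (f R * Rpower r t)) with (f R * / Rpower R t * (Rpower r t * Rpower r t)) by (field; lra).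
  replace (f r * Rpower r t) with (f r * / Rpower r t * (Rpower r t * Rpower r t)) by (field; lra).
  apply Rmult_le_compat_r; [nra | auto].
Qed.

Lemma le_bound (f : R -> R) (Hpos : forall r, 0 < r -> 0 < f r) (Hmono : forall r s, 0 < r -> r <= s -> f r <= f s) (Hac : loc_abs_cont f) t : ess_le_near0 f t ->
  exists D, 0 < D /\ forall r R, 0 < r -> r < R -> R <= D -> f r / f R >= Rpower (r / R) t.
Proof.
  intros [del [Hdel HN]]. exists (del / 2). split; [lra|]. intros r R Hr HrR HR.
  assert (Hm := mono_lemma (fun x => f x * (-1 * Rpower x (- t))) _ r R ltac:(lra) (ac_fg f Hpos Hmono Hac t (-1) r R Hr HrR ltac:(auto)) HN).
  assert (Hle : f r * (-1 * Rpower r (- t)) <= f R * (-1 * Rpower R (- t))).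
  { apply Hm. intros x Hx HNx.
    assert (Hex : exists l, derivable_pt_lim f x l /\ x * l / f x <= t).
    { apply NNPP; intros Hn; apply HNx; repeat split; auto; lra. }
    destruct Hex as [l [Hdl Htl]].
    exists (l * (-1 * Rpower x (- t)) + f x * (-1 * (- t * Rpower x (- t - 1)))). split.
    - apply (derivable_pt_lim_mult f (fun y => -1 * Rpower y (- t))); auto. apply deriv_g; lra.
    - rewrite rp_m1 by lra. assert (Hfx := Hpos x ltac:(lra)). pose proof (rp_pos x (-t)) as HP.
      set (P := Rpower x (- t)) in *.
      assert (x * l <= t * f x).
      { apply (Rmult_le_reg_r (/ f x)). apply Rinv_0_lt_compat; lra.
        replace (t * f x * / f x) with t by (field; lra). exact Htl. }
      replace (l * (-1 * P) + f x * (-1 * (- t * (P / x)))) with ((P / x) * (t * f x - x * l)) by (field; lra).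
      apply Rmult_le_pos; [apply Rlt_le, Rdiv_lt_0_compat; lra | lra]. }
  rewrite rp_div by lra. rewrite !Rpower_Ropp in Hle.
  pose proof (rp_pos r t). pose proof (rp_pos R t). assert (Hfr := Hpos r Hr). assert (HfR := Hpos R ltac:(lra)).
  apply Rle_ge.
  assert (Hle' : f R * / Rpower R t <= f r * / Rpower r t) by lra.
  apply (Rmult_le_reg_r (f R * Rpower r t)); [nra|].
  replace (f r / f R * (f R * Rpower r t)) with (f r * / Rpower r t * (Rpower r t * Rpower r t)) by (field; lra).
  replace (Rpower r t / Rpower R t * (f R * Rpower r t)) with (f R * / Rpower R t * (Rpower r t * Rpower r t)) by (field; lra).
  apply Rmult_le_compat_r; [nra | auto].
Qed.

Lemma le_nonneg (f : R -> R) (Hpos : forall r, 0 < r -> 0 < f r) (Hmono : forall r s, 0 < r -> r <= s -> f r <= f s) t : ess_le_near0 f t -> 0 <= t.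
Proof.
  intros [del [Hdel HN]]. apply Rnot_lt_le; intros Ht.
  assert (HAC : abs_cont_on (fun x => - x) (del/4) (del/2)).
  { intros eps He. exists eps. split; auto. intros n u v Hi Ho Hl.
    apply Rle_lt_trans with (psum (fun i => v i - u i) n); auto.
    apply psum_le. intros i Hin. destruct (Hi i Hin) as [? [? ?]].
    replace (- v i - - u i) with (- (v i - u i)) by ring. rewrite Rabs_Ropp, Rabs_right; lra. }
  assert (- (del/4) <= - (del/2)); [|lra].
  apply (mono_lemma (fun x => - x) _ (del/4) (del/2) ltac:(lra) HAC HN).
  intros x Hx HNx. exfalso. apply HNx. repeat split; try lra.
  intros [l [Hdl Hlt]]. assert (0 <= l) by (apply (deriv_mono_nonneg f x l); auto; lra).
  assert (0 <= x * l / f x) by (apply Rmult_le_pos; [nra| left; apply Rinv_0_lt_compat; apply Hpos; lra]).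
  lra.
Qed.



Lemma rp_exp_mono x p t : 0 < x -> x < 1 -> p <= t -> Rpower x t <= Rpower x p.
Proof. intros. unfold Rpower. apply exp_le'. assert (ln x < 0) by (rewrite <- ln_1; apply ln_increasing; lra). nra. Qed.

Lemma sup_above (P : R -> Prop) L p : is_sup (fun e => exists t, e = Fin t /\ P t) L ->
  ~ ER_le L (Fin p) -> exists t, P t /\ p < t.
Proof.
  intros [_ H] Hn. apply NNPP; intros Hn'. apply Hn, H. intros e [t [-> Ht]]. simpl.
  apply Rnot_lt_le; intros Hlt; apply Hn'; eauto.
Qed.
Lemma inf_below (P : R -> Prop) U p : is_inf (fun e => exists t, e = Fin t /\ P t) U ->
  ~ ER_le (Fin p) U -> exists t, P t /\ t < p.
Proof.
  intros [_ H] Hn. apply NNPP; intros Hn'. apply Hn, H. intros e [t [-> Ht]]. simpl.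
  apply Rnot_lt_le; intros Hlt; apply Hn'; eauto.
Qed.
Lemma lt_not_le1 p L : ER_lt (Fin p) L -> ~ ER_le L (Fin p).
Proof. unfold ER_lt; destruct L; simpl; intros [H1 H2] H3; try contradiction. apply H2; f_equal; lra. Qed.
Lemma lt_not_le2 p U : ER_lt U (Fin p) -> ~ ER_le (Fin p) U.
Proof. unfold ER_lt; destruct U; simpl; intros [H1 H2] H3; try contradiction. apply H2; f_equal; lra. Qed.

Lemma small_s1 C p t : 0 < C -> t < p -> exists s, 0 < s /\ s < 1 /\ C * Rpower s p < Rpower s t.
Proof.
  intros HC Htp. set (k := - (Rabs (ln C) + 1) / (p - t)).
  assert (Hk : k < 0) by (unfold k; apply Rdiv_neg_pos; [pose proof (Rabs_pos (ln C)); lra | lra]).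
  exists (exp k). split; [apply exp_pos|]. split.
  { rewrite <- exp_0. apply exp_increasing; lra. }
  unfold Rpower. rewrite ln_exp. rewrite <- (exp_ln C) at 1 by auto. rewrite <- exp_plus.
  apply exp_increasing.
  assert ((t - p) * k = Rabs (ln C) + 1) by (unfold k; field; lra).
  pose proof (Rle_abs (ln C)). nra.
Qed.
Lemma small_s2 C p t : 0 < C -> p < t -> exists s, 0 < s /\ s < 1 /\ Rpower s t < C * Rpower s p.
Proof.
  intros HC Htp. set (k := - (Rabs (ln C) + 1) / (t - p)).
  assert (Hk : k < 0) by (unfold k; apply Rdiv_neg_pos; [pose proof (Rabs_pos (ln C)); lra | lra]).
  exists (exp k). split; [apply exp_pos|]. split.
  { rewrite <- exp_0. apply exp_increasing; lra. }
  unfold Rpower. rewrite ln_exp. rewrite <- (exp_ln C) at 1 by auto. rewrite <- exp_plus.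
  apply exp_increasing.
  assert ((t - p) * k = - (Rabs (ln C) + 1)) by (unfold k; field; lra).
  pose proof (Rle_abs (- ln C)). rewrite Rabs_Ropp in H0. nra.
Qed.

Theorem lemma2p5 (X : Type) (d : X -> X -> R) (M : (X -> Prop) -> Prop)
  (mu : (X -> Prop) -> ER) (x : X) (q R0 : R) :
  is_metric d ->
  is_complete_borel_measure d M mu ->
  balls_pos_finite d mu ->
  0 < q -> 0 < R0 ->
  ((Qlow d mu x q <->
     exists C, 0 < C /\ forall r R, 0 < r -> r < R -> R <= R0 ->
       ball_meas d mu x r / ball_meas d mu x R <= C * Rpower (r / R) q) /\
   (Qup d mu x q <->
     exists C, 0 < C /\ forall r R, 0 < r -> r < R -> R <= R0 ->
       ball_meas d mu x r / ball_meas d mu x R >= C * Rpower (r / R) q)) /\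
  (loc_abs_cont (ball_meas d mu x) ->
   forall L U : ER,
     is_ess_liminf (ball_meas d mu x) L ->
     is_ess_limsup (ball_meas d mu x) U ->
     (forall p, 0 < p -> ER_lt (Fin p) L -> Qlow d mu x p) /\
     (forall p, Qlow d mu x p -> 0 < p /\ ER_le (Fin p) U) /\
     (forall p, ER_lt U (Fin p) -> Qup d mu x p) /\
     (forall p, Qup d mu x p -> ER_le L (Fin p))).
Proof.
  intros Hd Hm Hb Hq HR0.
  set (f := ball_meas d mu x).
  assert (Hpos : forall r, 0 < r -> 0 < f r) by (intros; apply (bm_pos d mu x r Hb); auto).
  assert (Hmono : forall r s, 0 < r -> r <= s -> f r <= f s) by (intros; apply (bm_mono d M mu); auto).
  split; [split; split|].
  - intros [_ H]. exact (BL_equiv f Hpos Hmono q 1 R0 Hq ltac:(lra) HR0 H).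
  - intros H. split; auto. exact (BL_equiv f Hpos Hmono q R0 1 Hq HR0 ltac:(lra) H).
  - intros [_ H]. exact (BU_equiv f Hpos Hmono q 1 R0 Hq ltac:(lra) HR0 H).
  - intros H. split; auto. exact (BU_equiv f Hpos Hmono q R0 1 Hq HR0 ltac:(lra) H).
  - intros Hac L U HL HU. split; [|split; [|split]].
    + intros p Hp HpL. destruct (sup_above _ L p HL (lt_not_le1 p L HpL)) as [t [Ht Hpt]].
      destruct (ge_bound f Hpos Hmono Hac t Ht) as [D [HD HB]].
      split; auto. apply (BL_equiv f Hpos Hmono p D 1 Hp HD ltac:(lra)).
      exists 1. split; [lra|]. intros r R Hr HrR HR.
      eapply Rle_trans; [apply HB; auto|]. rewrite Rmult_1_l.
      apply rp_exp_mono; [apply Rdiv_lt_0_compat; lra | | lra].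
      apply (Rmult_lt_reg_r R); [lra|]. unfold Rdiv; rewrite Rmult_assoc, Rinv_l; lra.
    + intros p [Hp Hlow]. split; auto. apply NNPP; intros Hn.
      destruct (inf_below _ U p HU Hn) as [t [Ht Htp]].
      destruct (le_bound f Hpos Hmono Hac t Ht) as [D [HD HB]].
      destruct (BL_equiv f Hpos Hmono p 1 D Hp ltac:(lra) HD Hlow) as [C [HC HBC]].
      destruct (small_s1 C p t HC Htp) as [s [Hs0 [Hs1 Hs]]].
      specialize (HB (s * D) D ltac:(nra) ltac:(nra) ltac:(lra)).
      specialize (HBC (s * D) D ltac:(nra) ltac:(nra) ltac:(lra)).
      replace (s * D / D) with s in HB, HBC by (field; lra). lra.
    + intros p HUp. destruct (inf_below _ U p HU (lt_not_le2 p U HUp)) as [t [Ht Htp]].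
      pose proof (le_nonneg f Hpos Hmono t Ht).
      destruct (le_bound f Hpos Hmono Hac t Ht) as [D [HD HB]].
      split; [lra|]. apply (BU_equiv f Hpos Hmono p D 1 ltac:(lra) HD ltac:(lra)).
      exists 1. split; [lra|]. intros r R Hr HrR HR.
      specialize (HB r R Hr HrR HR). rewrite Rmult_1_l. apply Rle_ge. apply Rge_le in HB.
      eapply Rle_trans; [|apply HB].
      apply rp_exp_mono; [apply Rdiv_lt_0_compat; lra | | lra].
      apply (Rmult_lt_reg_r R); [lra|]. unfold Rdiv; rewrite Rmult_assoc, Rinv_l; lra.
    + intros p [Hp Hup]. apply NNPP; intros Hn.
      destruct (sup_above _ L p HL Hn) as [t [Ht Hpt]].
      destruct (ge_bound f Hpos Hmono Hac t Ht) as [D [HD HB]].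
      destruct (BU_equiv f Hpos Hmono p 1 D Hp ltac:(lra) HD Hup) as [C [HC HBC]].
      destruct (small_s2 C p t HC Hpt) as [s [Hs0 [Hs1 Hs]]].
      specialize (HB (s * D) D ltac:(nra) ltac:(nra) ltac:(lra)).
      specialize (HBC (s * D) D ltac:(nra) ltac:(nra) ltac:(lra)).
      replace (s * D / D) with s in HB, HBC by (field; lra). lra.
Qed.
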